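(* Let $n\in\mathbb N$, let $W,W',M,M'$ be pairwise disjoint sets each of cardinality $n$, and let $w\in W$, $m'\in M'$. There exist functions $\succ_{W\cup W'}:\mathcal P(W,M)\to\mathcal F(W\cup W',M\cup M')$ and $\succ_{M\cup M'}:\mathcal P(M,W)\to\mathcal F(M\cup M',W\cup W')$ such that for every $\succ_W\in\mathcal P(W,M)$ and $\succ_M\in\mathcal P(M,W)$ the following are equivalent: (1) $w$ is single in some marriage between $W$ and $M$ that is stable with respect to $\succ_W,\succ_M$; (2) $w$ and $m'$ are married in some marriage between $W\cup W'$ and $M\cup M'$ that is stable with respect to $\succ_{W\cup W'}(\succ_W)$ and $\succ_{M\cup M'}(\succ_M)$; (3) $w$ and $m'$ are married in every marriage between $W\cup W'$ and $M\cup M'$ that is stable with respect to $\succ_{W\cup W'}(\succ_W)$ and $\succ_{M\cup M'}(\succ_M)$.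
   Context: $\mathcal P(A,B)$ is the set of profiles assigning to each $a\in A$ a preference list, i.e. a totally ordered subset of $B$ (others unacceptable); $\mathcal F(A,B)\subseteq\mathcal P(A,B)$ consists of profiles in which every list contains all of $B$. A participant prefers $x$ over $x'$ if $x$ precedes $x'$ on their list, or $x$ is on the list and $x'$ is not (being single counts as being matched to someone off the list). A marriage is a one-to-one map between a subset of the women and a subset of the men; unmatched participants are single. A marriage is stable if every married participant is married to someone on their list and there is no blocking pair $(w,m)$ where $w$ prefers $m$ to her current situation and $m$ prefers $w$ to his. *)

(* Defs.v *)
From mathcomp Require Import all_boot.
Set Implicit Arguments. Unset Strict Implicit. Unset Printing Implicit Defensive.

Section Marriage.
Variables A B : finType.

(* A preference profile assigns to each a : A a preference list: a
   duplicate-free sequence of elements of B (earlier = more preferred);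
   elements of B not on the list are unacceptable. *)
Definition is_profile (p : A -> seq B) : Prop := forall a, uniq (p a).

Definition is_full_profile (p : A -> seq B) : Prop :=
  is_profile p /\ forall a b, b \in p a.

(* a prefers x over x' (None = being single, which counts as being matched
   to someone off the list). *)
Definition prefers (p : A -> seq B) (a : A) (x x' : option B) : bool :=
  match x with
  | None => false
  | Some b =>
      (b \in p a) &&
      match x' with
      | None => true
      | Some b' => index b (p a) < index b' (p a)
      end
  end.
End Marriage.

Section Matching.
Variables Wo Me : finType.

Definition is_marriage (mu : Wo -> option Me) : Prop :=
  forall w1 w2 m, mu w1 = Some m -> mu w2 = Some m -> w1 = w2.

Definition partner (mu : Wo -> option Me) (m : Me) : option Wo :=
  [pick w | mu w == Some m].

Definition is_stable (pW : Wo -> seq Me) (pM : Me -> seq Wo)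
    (mu : Wo -> option Me) : Prop :=
  is_marriage mu /\
  (forall w m, mu w = Some m -> (m \in pW w) /\ (w \in pM m)) /\
  (forall w m, ~ (prefers pW w (Some m) (mu w) &&
                  prefers pM m (Some w) (partner mu m))).
End Matching.

(* Main.v *)
Require Import Defs.
From mathcomp Require Import all_boot zify.
From Stdlib Require Import Classical.
Set Implicit Arguments. Unset Strict Implicit. Unset Printing Implicit Defensive.

Lemma partnerP1 (Wo Me : finType) (mu : Wo -> option Me) m x :
  partner mu m = Some x -> mu x = Some m.
Proof. by rewrite /partner; case: pickP => // y /eqP H [<-]. Qed.

Lemma partnerP2 (Wo Me : finType) (mu : Wo -> option Me) m x :
  is_marriage mu -> mu x = Some m -> partner mu m = Some x.
Proof.
move=> Hm Hx; rewrite /partner; case: pickP => [y /eqP Hy|H].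
- by rewrite (Hm _ _ _ Hy Hx).
- by move: (H x); rewrite Hx eqxx.
Qed.

Lemma prefers_total (A B : finType) (p : A -> seq B) a b u :
  uniq (p a) -> b \in p a -> u <> Some b -> (forall c, u = Some c -> c \in p a) ->
  ~~ prefers p a (Some b) u -> prefers p a u (Some b).
Proof.
move=> Hu Hb Hne Hc; case: u Hne Hc => [c|] Hne Hc /=; last by rewrite Hb.
rewrite Hb /= -leqNgt => Hle.
have Hcin := Hc c erefl. rewrite Hcin /= ltn_neqAle Hle andbT.
apply/negP => /eqP E. apply: Hne. congr Some.
by rewrite -(nth_index b Hcin) E nth_index.
Qed.

Lemma rural (Wo Me : finType) (pW : Wo -> seq Me) (pM : Me -> seq Wo) mu nu w :
  is_profile pW -> is_profile pM -> is_stable pW pM mu -> is_stable pW pM nu ->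
  mu w = None -> nu w = None.
Proof.
move=> HpW HpM [Mm [Am Bm]] [Mn [An Bn]] Hw.
case Enw: (nu w) => [m0|] //; exfalso.
pose A := [set x | prefers pW x (nu x) (mu x)].
pose B := [set m | prefers pM m (partner mu m) (partner nu m)].
have R1 : forall x, x \in A -> exists m, nu x = Some m /\ m \in B.
  move=> x; rewrite inE.
  case Ex: (nu x) => [m|] //= /andP [HmW Hpref].
  exists m; split => //; rewrite inE.
  have Hpn : partner nu m = Some x by apply: partnerP2.
  rewrite Hpn.
  have [_ HxM] := An x m Ex.
  apply: prefers_total => //.
  + move=> Hpm; have Hmx := partnerP1 Hpm.
    by rewrite Hmx ltnn in Hpref.
  + move=> c Hc; exact: (proj2 (Am c m (partnerP1 Hc))).
  + apply/negP => H; apply: (Bm x m).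
    have Hp : prefers pW x (Some m) (mu x) by rewrite /= HmW.
    by rewrite Hp H.
have R2 : forall m, m \in B -> exists x, partner mu m = Some x /\ x \in A.
  move=> m; rewrite inE.
  case Ep: (partner mu m) => [x|] //= /andP [HxM Hpref].
  exists x; split => //; rewrite inE.
  have Hmx := partnerP1 Ep. rewrite Hmx.
  have [HmW _] := Am x m Hmx.
  apply: prefers_total => //.
  + move=> Hnx; have Hpn := partnerP2 Mn Hnx.
    by rewrite Hpn ltnn in Hpref.
  + move=> c Hc; exact: (proj1 (An x c Hc)).
  + apply/negP => H; apply: (Bn x m).
    have Hp : prefers pM m (Some x) (partner nu m) by rewrite /= HxM.
    by rewrite Hp H.
have inj1 : {in A &, injective nu}.
  move=> x1 x2 H1 _ E. have [m [H1m _]] := R1 x1 H1.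
  rewrite H1m in E. exact: Mn _ _ _ H1m (esym E).
have inj2 : {in B &, injective (partner mu)}.
  move=> m1 m2 H1 _ E. have [x [H1x _]] := R2 m1 H1.
  rewrite H1x in E.
  have := partnerP1 H1x; rewrite (partnerP1 (esym E)); by case.
have S1 : nu @: A \subset Some @: B.
  apply/subsetP => o /imsetP [x Hx ->]. have [m [-> HmB]] := R1 x Hx.
  by rewrite imset_f.
have S2 : partner mu @: B \subset Some @: A.
  apply/subsetP => o /imsetP [m Hm ->]. have [x [-> HxA]] := R2 m Hm.
  by rewrite imset_f.
have c1 : #|A| <= #|B|.
  by rewrite -(card_in_imset inj1) -(card_imset B (@Some_inj _)) subset_leq_card.
have c2 : #|B| <= #|A|.
  by rewrite -(card_in_imset inj2) -(card_imset A (@Some_inj _)) subset_leq_card.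
have E : partner mu @: B = Some @: A.
  apply/eqP; rewrite eqEcard S2 /= card_imset; last exact: Some_inj.
  by rewrite (card_in_imset inj2).
have wA : w \in A.
  by rewrite inE Enw Hw /= (proj1 (An w m0 Enw)).
have : Some w \in partner mu @: B by rewrite E imset_f.
case/imsetP => m _ Hm.
by rewrite (partnerP1 (esym Hm)) in Hw.
Qed.

Definition hd_of (Wo Me : finType) (pM : Me -> seq Wo) (k : Me -> nat) m :=
  ohead (drop (k m) (pM m)).

Definition Inv (Wo Me : finType) (pW : Wo -> seq Me) (pM : Me -> seq Wo) k :=
  forall m x, x \in take (k m) (pM m) -> m \in pW x ->
   exists m2, hd_of pM k m2 = Some x /\ m2 \in pW x /\ index m2 (pW x) < index m (pW x).

Lemma hd_mem (Wo Me : finType) (pM : Me -> seq Wo) k m x :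
  hd_of pM k m = Some x -> x \in pM m.
Proof.
rewrite /hd_of; case E: (drop (k m) (pM m)) => [|y s] //= [<-].
apply: (@mem_drop (k m)); by rewrite E mem_head.
Qed.

Lemma idx_drop (T : eqType) (s : seq T) k x y t :
  drop k s = y :: t -> x \in drop k s -> x \notin take k s -> index y s <= index x s.
Proof.
move=> E Hx Hnt.
rewrite -(cat_take_drop k s) !index_cat (negbTE Hnt).
case: ifP => Hy.
  by apply: leq_trans (ltnW _) (leq_addr _ _); rewrite index_mem.
by rewrite E /= eqxx addn0 leq_addr.
Qed.

Lemma final_stable (Wo Me : finType) (pW : Wo -> seq Me) (pM : Me -> seq Wo) k :
  is_profile pW -> is_profile pM -> Inv pW pM k ->
  (forall m x, hd_of pM k m = Some x -> m \in pW x /\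
     forall m2, hd_of pM k m2 = Some x -> m2 \in pW x -> index m (pW x) <= index m2 (pW x)) ->
  exists mu, is_stable pW pM mu.
Proof.
move=> HpW HpM Hinv Hfin.
set h := hd_of pM k in Hinv Hfin.
have T2 : forall m1 m2 x, h m1 = Some x -> h m2 = Some x -> m1 = m2.
  move=> m1 m2 x H1 H2.
  have [i1 l1] := Hfin _ _ H1; have [i2 l2] := Hfin _ _ H2.
  have E : index m1 (pW x) = index m2 (pW x).
    by apply/eqP; rewrite eqn_leq l1 // l2.
  by rewrite -(nth_index m1 i1) E nth_index.
pose mu x := [pick m | h m == Some x].
have muP1 : forall x m, mu x = Some m -> h m = Some x.
  by move=> x m; rewrite /mu; case: pickP => // m' /eqP H [<-].
have muP2 : forall x m, h m = Some x -> mu x = Some m.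
  move=> x m Hh; rewrite /mu; case: pickP => [m' /eqP H | H].
    by rewrite (T2 _ _ _ H Hh).
  by move: (H m); rewrite Hh eqxx.
have Mmu : is_marriage mu.
  move=> x1 x2 m H1 H2. have := muP1 _ _ H1; rewrite (muP1 _ _ H2); by case.
have parP : forall m x, h m = Some x -> partner mu m = Some x.
  by move=> m x H; apply: partnerP2 => //; apply: muP2.
exists mu; split => //; split.
  move=> x m H; have Hh := muP1 _ _ H; split; first exact: (proj1 (Hfin _ _ Hh)).
  exact: hd_mem Hh.
move=> x m /andP [Hx Hm].
move: Hx Hm => /= /andP [HmW Hx] /andP [HxM Hm].
case Ht: (x \in take (k m) (pM m)).
  have [m2 [H2 [H2W Hlt]]] := Hinv m x Ht HmW.
  rewrite (muP2 _ _ H2) in Hx.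
  by move: (ltn_trans Hx Hlt); rewrite ltnn.
have Hxd : x \in drop (k m) (pM m).
  by move: HxM; rewrite -{1}(cat_take_drop (k m) (pM m)) mem_cat Ht.
case E: (drop (k m) (pM m)) (Hxd) => [|y t] //= _.
have Hh : h m = Some y by rewrite /h /hd_of E.
rewrite (parP _ _ Hh) in Hm.
have := idx_drop E Hxd (negbT Ht).
by rewrite leqNgt Hm.
Qed.

Lemma step (Wo Me : finType) (pW : Wo -> seq Me) (pM : Me -> seq Wo) k m x :
  Inv pW pM k -> hd_of pM k m = Some x ->
  (m \in pW x -> exists m2, hd_of pM k m2 = Some x /\ m2 \in pW x /\ index m2 (pW x) < index m (pW x)) ->
  let k' := fun i => if i == m then (k m).+1 else k i in
  Inv pW pM k' /\ \sum_i (size (pM i) - k' i) < \sum_i (size (pM i) - k i).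
Proof.
move=> Hinv Hh Hbad k'.
have hne : forall i, i != m -> hd_of pM k' i = hd_of pM k i.
  by move=> i Hi; rewrite /hd_of /k' (negbTE Hi).
move: Hh; rewrite {1}/hd_of; case E: (drop (k m) (pM m)) => [|y t] //= [Ey]; subst y.
have Hk : k m < size (pM m).
  by have := size_drop (k m) (pM m); rewrite E /= => H; lia.
have Hnth : nth x (pM m) (k m) = x.
  by rewrite -[k m]addn0 -nth_drop E.
have help : forall x2 v, (exists m2, hd_of pM k m2 = Some x2 /\ m2 \in pW x2 /\ index m2 (pW x2) < v) ->
    exists m2, hd_of pM k' m2 = Some x2 /\ m2 \in pW x2 /\ index m2 (pW x2) < v.
  move=> x2 v [m2 [H2 [H2W Hlt]]].
  case: (eqVneq m2 m) => Hm2; last by exists m2; split => //; rewrite hne.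
  subst m2. move: H2; rewrite {1}/hd_of E => -[Ex2]; subst x2.
  have [m3 [H3 [H3W Hlt3]]] := Hbad H2W.
  have Hm3 : m3 != m by apply/eqP => E3; subst m3; rewrite ltnn in Hlt3.
  exists m3; rewrite hne //; split => //; split => //; exact: ltn_trans Hlt3 Hlt.
split.
  move=> m' x'' Hin Hm'.
  case: (eqVneq m' m) => Hmm.
    subst m'; move: Hin; rewrite /k' eqxx (take_nth x Hk) Hnth mem_rcons in_cons.
    case/orP => [/eqP Ex | Hin]; first by subst x''; exact: help (Hbad Hm').
    exact: help (Hinv _ _ Hin Hm').
  move: Hin; rewrite /k' (negbTE Hmm) => Hin.
  exact: help (Hinv _ _ Hin Hm').
rewrite (bigD1 m) //= [X in _ < X](bigD1 m) //= /k' eqxx.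
rewrite (eq_bigr (fun i => size (pM i) - k i)); last by move=> i /negbTE ->.
rewrite ltn_add2r; lia.
Qed.

Lemma exists_stable (Wo Me : finType) (pW : Wo -> seq Me) (pM : Me -> seq Wo) :
  is_profile pW -> is_profile pM -> exists mu, is_stable pW pM mu.
Proof.
move=> HpW HpM.
suff aux : forall N k, \sum_i (size (pM i) - k i) <= N -> Inv pW pM k ->
    exists mu, is_stable pW pM mu.
  apply: (aux _ (fun _ => 0)) => //.
  by move=> m x; rewrite take0.
elim=> [|N IH] k Hs Hinv;
  (case: (classic (exists m x, hd_of pM k m = Some x /\ (m \in pW x ->
      exists m2, hd_of pM k m2 = Some x /\ m2 \in pW x /\ index m2 (pW x) < index m (pW x))))
   => [[m [x [Hh Hb]]] | Hnb]).
- have [_ Hlt] := step Hinv Hh Hb. lia.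
- apply: (final_stable HpW HpM Hinv) => m x Hh; split.
    apply: NNPP => Hn; apply: Hnb; exists m, x; split => // Hm; by rewrite Hm in Hn.
  move=> m2 H2 H2W; rewrite leqNgt; apply/negP => Hlt; apply: Hnb.
  by exists m, x; split => // _; exists m2.
- have [Hi Hlt] := step Hinv Hh Hb. apply: IH Hi. lia.
- apply: (final_stable HpW HpM Hinv) => m x Hh; split.
    apply: NNPP => Hn; apply: Hnb; exists m, x; split => // Hm; by rewrite Hm in Hn.
  move=> m2 H2 H2W; rewrite leqNgt; apply/negP => Hlt; apply: Hnb.
  by exists m, x; split => // _; exists m2.
Qed.

Definition mk_full (T : finType) (s : seq T) : seq T :=
  s ++ [seq u <- enum T | u \notin s].

Lemma mk_full_uniq (T : finType) (s : seq T) : uniq s -> uniq (mk_full s).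
Proof.
move=> Hs; rewrite /mk_full cat_uniq Hs filter_uniq ?enum_uniq // andbT.
apply/hasP => -[u]; rewrite mem_filter => /andP [Hu _] Hu'.
by rewrite Hu' in Hu.
Qed.

Lemma mk_full_mem (T : finType) (s : seq T) u : u \in mk_full s.
Proof. by rewrite /mk_full mem_cat mem_filter mem_enum andbT; case: (u \in s). Qed.

Lemma pref_mk (A B : finType) (p : A -> seq B) a s b u :
  p a = mk_full s -> b \in s ->
  (forall c, u = Some c -> c \in s -> index b s < index c s) ->
  prefers p a (Some b) u.
Proof.
move=> Hp Hb Hc; rewrite /= Hp mk_full_mem /=.
case: u Hc => [c|] // Hc.
rewrite /mk_full !index_cat Hb.
case: ifP => Hcs; first exact: Hc.
by apply: leq_trans (leq_addr _ _); rewrite index_mem.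
Qed.

Definition fWb (W W' M M' : finType) (d : W -> M') (e : M -> W') (pW : W -> seq M)
  (x : W + W') : seq (M + M')%type :=
  match x with
  | inl x => mk_full (map inl (pW x) ++ [:: inr (d x)])
  | inr x' => mk_full (if [pick y | e y == x'] is Some y then [:: inl y] else [::])
  end.

Definition fMb (W W' M M' : finType) (d : W -> M') (e : M -> W') (pM : M -> seq W)
  (y : M + M') : seq (W + W')%type :=
  match y with
  | inl y => mk_full (map inl (pM y) ++ [:: inr (e y)])
  | inr z => mk_full (if [pick x | d x == z] is Some x then [:: inl x] else [::])
  end.

Lemma uniq_s1 (A C : eqType) (s : seq A) (c : C) :
  uniq s -> uniq (map (@inl A C) s ++ [:: inr c]).
Proof.
move=> Hs; rewrite cat_uniq map_inj_uniq //=; last by move=> ? ? [].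
rewrite ?Hs /= ?orbF ?andbT; by apply/negP => /mapP [? _ Ec]; discriminate Ec.
Qed.

Lemma full_fWb (W W' M M' : finType) (d : W -> M') (e : M -> W') pW :
  is_profile pW -> is_full_profile (fWb d e pW).
Proof.
move=> Hp; split; last by case=> a b /=; rewrite mk_full_mem.
move=> [x|x] /=; apply: mk_full_uniq; first exact: uniq_s1.
by case: pickP.
Qed.

Lemma full_fMb (W W' M M' : finType) (d : W -> M') (e : M -> W') pM :
  is_profile pM -> is_full_profile (fMb d e pM).
Proof.
move=> Hp; split; last by case=> a b /=; rewrite mk_full_mem.
move=> [x|x] /=; apply: mk_full_uniq; first exact: uniq_s1.
by case: pickP.
Qed.

Lemma idx_s1_l (A C : eqType) (s : seq A) (c : C) a :
  a \in s -> index (inl a) (map (@inl A C) s ++ [:: inr c]) = index a s.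
Proof.
move=> Ha; rewrite index_cat map_f // index_map //; by move=> ? ? [].
Qed.

Lemma idx_s1_r (A C : eqType) (s : seq A) (c : C) :
  index (inr c) (map (@inl A C) s ++ [:: inr c]) = size s.
Proof.
rewrite index_cat; case: ifP => [/mapP [] //|_].
by rewrite size_map /= eqxx addn0.
Qed.

Lemma mem_s1 (A C : eqType) (s : seq A) (c : C) u :
  u \in map (@inl A C) s ++ [:: inr c] ->
  u = inr c \/ exists a, u = inl a /\ a \in s.
Proof.
rewrite mem_cat inE => /orP [/mapP [a Ha ->]|/eqP ->]; last by left.
by right; exists a.
Qed.

Section Big.
End Big.

Lemma keyA (W W' M M' : finType) (d : W -> M') (e : M -> W') (dI : injective d)
  pW pM nu x :
  is_profile pW -> is_stable (fWb d e pW) (fMb d e pM) nu ->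
  nu (inl x) = Some (inr (d x)) \/ exists y, nu (inl x) = Some (inl y) /\ y \in pW x.
Proof.
move=> HpW [Mn [An Bn]].
apply: NNPP => Hn; apply: (Bn (inl x) (inr (d x))); apply/andP; split.
  apply: (@pref_mk _ _ _ _ (map inl (pW x) ++ [:: inr (d x)])) => //.
    by rewrite mem_cat mem_head orbT.
  move=> c Hc /mem_s1 [Ec|[y [Ec Hy]]]; subst c.
    by exfalso; apply: Hn; left.
  by exfalso; apply: Hn; right; exists y.
have Hpk : [pick x0 | d x0 == d x] = Some x.
  case: pickP => [x0 /eqP /dI -> //|H]; by move: (H x); rewrite eqxx.
apply: (@pref_mk _ _ _ _ [:: inl x]); first by rewrite /= Hpk.
  by rewrite mem_head.
move=> c Hc; rewrite inE => /eqP Ec; subst c.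
by exfalso; apply: Hn; left; apply: partnerP1.
Qed.

Lemma keyB (W W' M M' : finType) (d : W -> M') (e : M -> W') (eI : injective e)
  pW pM nu y :
  is_profile pM -> is_stable (fWb d e pW) (fMb d e pM) nu ->
  partner nu (inl y) = Some (inr (e y)) \/
  exists x, partner nu (inl y) = Some (inl x) /\ x \in pM y.
Proof.
move=> HpM [Mn [An Bn]].
apply: NNPP => Hn; apply: (Bn (inr (e y)) (inl y)); apply/andP; split.
  have Hpk : [pick y0 | e y0 == e y] = Some y.
    case: pickP => [y0 /eqP /eI -> //|H]; by move: (H y); rewrite eqxx.
  apply: (@pref_mk _ _ _ _ [:: inl y]); first by rewrite /= Hpk.
    by rewrite mem_head.
  move=> c Hc; rewrite inE => /eqP Ec; subst c.
  by exfalso; apply: Hn; left; apply: partnerP2.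
apply: (@pref_mk _ _ _ _ (map inl (pM y) ++ [:: inr (e y)])) => //.
  by rewrite mem_cat mem_head orbT.
move=> c Hc /mem_s1 [Ec|[x [Ec Hx]]]; subst c.
  by exfalso; apply: Hn; left.
by exfalso; apply: Hn; right; exists x.
Qed.

Definition rs (W W' M M' : finType) (nu : W + W' -> option (M + M')%type) (x : W) : option M :=
  match nu (inl x) with Some (inl y) => Some y | _ => None end.

Lemma restr_stable (W W' M M' : finType) (d : W -> M') (e : M -> W')
  (dI : injective d) (eI : injective e) pW pM nu :
  is_profile pW -> is_profile pM -> is_stable (fWb d e pW) (fMb d e pM) nu ->
  is_stable pW pM (rs nu).
Proof.
move=> HpW HpM Hst; have [Mn [An Bn]] := Hst.
have rsE : forall x y, rs nu x = Some y -> nu (inl x) = Some (inl y).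
  by move=> x y; rewrite /rs; case: (nu (inl x)) => [[a|a]|] // [->].
have rsE' : forall x y, nu (inl x) = Some (inl y) -> rs nu x = Some y.
  by move=> x y; rewrite /rs => ->.
have Mr : is_marriage (rs nu).
  move=> x1 x2 m /rsE H1 /rsE H2. by have [] := Mn _ _ _ H1 H2.
split => //; split.
  move=> x y /rsE H; split.
    case: (keyA dI x HpW Hst) => [H2|[y' [H' Hy]]]; first congruence.
    have E : y' = y by congruence. by rewrite -E.
  have Hp := partnerP2 Mn H.
  case: (keyB eI y HpM Hst) => [H2|[x' [H' Hx]]]; first congruence.
  have E : x' = x by congruence. by rewrite -E.
move=> x y /andP [Hx Hy]; apply: (Bn (inl x) (inl y)); apply/andP; split.
  rewrite /= in Hx; case/andP: Hx => HyW Hx.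
  apply: (@pref_mk _ _ _ _ (map inl (pW x) ++ [:: inr (d x)])) => //.
    by rewrite mem_cat map_f.
  move=> c Hc _; rewrite idx_s1_l //.
  case: (keyA dI x HpW Hst) => [H2|[y' [H' Hy']]].
    have -> : c = inr (d x) by congruence.
    by rewrite idx_s1_r index_mem.
  have -> : c = inl y' by congruence.
  by rewrite idx_s1_l //; move: Hx; rewrite /rs H'.
rewrite /= in Hy; case/andP: Hy => HxM Hy.
apply: (@pref_mk _ _ _ _ (map inl (pM y) ++ [:: inr (e y)])) => //.
  by rewrite mem_cat map_f.
move=> c Hc _; rewrite idx_s1_l //.
case: (keyB eI y HpM Hst) => [H2|[x' [H' Hx']]].
  have -> : c = inr (e y) by congruence.
  by rewrite idx_s1_r index_mem.
have -> : c = inl x' by congruence.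
rewrite idx_s1_l //.
have Hpr : partner (rs nu) y = Some x'.
  by apply: partnerP2 => //; apply: rsE'; apply: partnerP1.
by rewrite Hpr in Hy.
Qed.

Lemma keyC (W W' M M' : finType) (d : W -> M') (e : M -> W') (dI : injective d)
  pW pM nu x :
  is_profile pW -> is_stable (fWb d e pW) (fMb d e pM) nu ->
  rs nu x = None -> nu (inl x) = Some (inr (d x)).
Proof.
move=> HpW Hst; rewrite /rs.
case: (keyA dI x HpW Hst) => [//|[y' [H' _]]]; by rewrite H'.
Qed.

Lemma inj_of_card (A B : finType) : #|A| = #|B| -> exists f : A -> B, injective f.
Proof.
move=> E; exists (fun x => enum_val (cast_ord E (enum_rank x))).
move=> x1 x2 /enum_val_inj /cast_ord_inj; exact: enum_rank_inj.
Qed.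

Lemma inj_fix (A B : finType) (a : A) (b0 : B) : #|A| = #|B| ->
  exists f : A -> B, injective f /\ f a = b0.
Proof.
move=> /inj_of_card [b bI].
exists (fun x => if x == a then b0 else if b x == b0 then b a else b x).
split; last by rewrite eqxx.
move=> x1 x2 /=.
case: (eqVneq x1 a) => H1; case: (eqVneq x2 a) => H2; try by subst.
- case: (eqVneq (b x2) b0) => H3 E.
    by move: H2; rewrite (bI _ _ (etrans H3 E)) eqxx.
  by rewrite E eqxx in H3.
- case: (eqVneq (b x1) b0) => H3 E.
    by move: H1; rewrite -(bI _ _ (etrans E (esym H3))) eqxx.
  by rewrite E eqxx in H3.
- case: (eqVneq (b x1) b0) => H3; case: (eqVneq (b x2) b0) => H4 E.
  + by apply: bI; rewrite H3 H4.
  + by move: H2; rewrite -(bI _ _ E) eqxx.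
  + by move: H1; rewrite (bI _ _ E) eqxx.
  + exact: bI.
Qed.

Theorem lemma23 (n : nat) (W W' M M' : finType)
  (hW : #|W| = n) (hW' : #|W'| = n) (hM : #|M| = n) (hM' : #|M'| = n)
  (w : W) (m' : M') :
  exists (fW : (W -> seq M) -> (W + W' -> seq (M + M')%type))
         (fM : (M -> seq W) -> (M + M' -> seq (W + W')%type)),
    (forall pW, is_profile pW -> is_full_profile (fW pW)) /\
    (forall pM, is_profile pM -> is_full_profile (fM pM)) /\
    (forall (pW : W -> seq M) (pM : M -> seq W),
       is_profile pW -> is_profile pM ->
       let c1 := exists mu : W -> option M, is_stable pW pM mu /\ mu w = None in
       let c2 := exists mu : W + W' -> option (M + M')%type,
                   is_stable (fW pW) (fM pM) mu /\ mu (inl w) = Some (inr m') in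
       let c3 := forall mu : W + W' -> option (M + M')%type,
                   is_stable (fW pW) (fM pM) mu -> mu (inl w) = Some (inr m') in
       (c1 <-> c2) /\ (c2 <-> c3)).
Proof.
have [d [dI dw]] := @inj_fix W M' w m' (etrans hW (esym hM')).
have [e eI] := @inj_of_card M W' (etrans hM (esym hW')).
exists (fWb d e), (fMb d e); split; first exact: full_fWb.
split; first exact: full_fMb.
move=> pW pM HpW HpM c1 c2 c3.
have c2c1 : c2 -> c1.
  move=> [nu [Hst Hw]]; exists (rs nu); split; first exact: restr_stable Hst.
  by rewrite /rs Hw.
have c1c3 : c1 -> c3.
  move=> [mu [Hmu Hw]] nu Hst; rewrite -dw; apply: (keyC dI HpW Hst).
  exact: rural HpW HpM Hmu (restr_stable dI eI HpW HpM Hst) Hw.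
have c3c2 : c3 -> c2.
  move=> H3.
  have [nu Hst] := exists_stable (proj1 (full_fWb d e HpW)) (proj1 (full_fMb d e HpM)).
  by exists nu; split => //; apply: H3.
split; split.
- by move=> h; apply: c3c2; exact: c1c3 h.
- exact: c2c1.
- by move=> h; exact: c1c3 (c2c1 h).
- exact: c3c2.
Qed.
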